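(* Let $K$ be an algebraically closed field of characteristic $p>0$, $p\neq 2$, and $n\geq 4$. Let $\Phi$ be a group automorphism of $\mathrm{Aut}_0 K[x_1,\ldots,x_n]$ which fixes every point of the standard torus (the automorphisms $x_i\mapsto\lambda_ix_i$, $\lambda_i\in K^\times$). Fix a multi-index $(i_2,\ldots,i_n)$ of nonnegative integers with $i_2+\cdots+i_n\geq 2$. For $\beta\in K^\times$ let $M=\beta x_2^{i_2}\cdots x_n^{i_n}$ and let $\varphi$ be the automorphism $x_1\mapsto x_1+M$, $x_k\mapsto x_k$ for $k=2,\ldots,n$. Then $\Phi(\varphi)$ is the automorphism $x_1\mapsto x_1+aM$, $x_k\mapsto x_k$ ($k\geq 2$), where $a\in K^\times$ is a constant depending only on the multi-index $(i_2,\ldots,i_n)$ (in particular independent of $\beta$).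
   Context: $\mathrm{Aut}_0 K[x_1,\ldots,x_n]$ is the group under composition of $K$-algebra automorphisms of $K[x_1,\ldots,x_n]$ preserving the origin, i.e. each $\varphi(x_i)$ has zero constant term. *)

(* Defs.v *)
From HB Require Import structures.
From mathcomp Require Import all_boot all_order all_algebra.
From mathcomp Require Import mpoly.
Set Implicit Arguments. Unset Strict Implicit. Unset Printing Implicit Defensive.
Import GRing.Theory.
Local Open Scope ring_scope.

(* A K-algebra endomorphism of K[x_1,...,x_n] is determined by the images of
   the variables: the tuple (phi(x_1), ..., phi(x_n)).  Variable x_{i+1} is 'X_i
   with i : 'I_n (so x_1 is the variable of index 0). *)
Definition endo (K : fieldType) (n : nat) := n.-tuple {mpoly K[n]}.

Definition endo_id (K : fieldType) (n : nat) : endo K n :=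
  [tuple ('X_i : {mpoly K[n]}) | i < n].

(* Composition (phi \o psi): (phi \o psi)(x_i) = phi(psi(x_i)) = psi_i(phi_1,...,phi_n). *)
Definition endo_comp (K : fieldType) (n : nat) (f g : endo K n) : endo K n :=
  [tuple (comp_mpoly f (tnth g i)) | i < n].

Definition is_aut (K : fieldType) (n : nat) (f : endo K n) : Prop :=
  exists g : endo K n, endo_comp f g = endo_id K n /\ endo_comp g f = endo_id K n.

Definition is_aut0 (K : fieldType) (n : nat) (f : endo K n) : Prop :=
  is_aut f /\ forall i : 'I_n, (tnth f i)@_0%MM = 0.

(* Phi is a group automorphism of Aut_0 K[x_1..x_n] (Phi given as a map on
   endomorphisms, only its restriction to Aut_0 matters). *)
Definition is_group_aut_Aut0 (K : fieldType) (n : nat) (Phi : endo K n -> endo K n) : Prop :=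
  [/\ forall f, is_aut0 f -> is_aut0 (Phi f),
      forall f g, is_aut0 f -> is_aut0 g -> Phi (endo_comp f g) = endo_comp (Phi f) (Phi g),
      forall f g, is_aut0 f -> is_aut0 g -> Phi f = Phi g -> f = g
    & forall g, is_aut0 g -> exists2 f, is_aut0 f & Phi f = g].

Definition torus_elt (K : fieldType) (n : nat) (lam : 'I_n -> K) : endo K n :=
  [tuple (lam i *: ('X_i : {mpoly K[n]})) | i < n].

Definition elem_aut (K : fieldType) (n : nat) (c : K) (mon : 'X_{1..n}) : endo K n :=
  [tuple (if val i == 0%N then 'X_i + c *: 'X_[mon] else ('X_i : {mpoly K[n]})) | i < n].

(* Main.v *)
Require Import Defs.
From HB Require Import structures.
From mathcomp Require Import all_boot all_order all_algebra.
From mathcomp Require Import mpoly.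
From mathcomp Require Import ring zify.
Set Implicit Arguments. Unset Strict Implicit. Unset Printing Implicit Defensive.
Import GRing.Theory.
Local Open Scope ring_scope.

Local Notation "'U_(' i )" := (mnm1 i).
Lemma neqF (T : eqType) (x y : T) : x != y -> (y == x) = false.
Proof. by rewrite eq_sym => /negbTE. Qed.

Section S.
Variable K : closedFieldType.
Variable n' : nat.
Local Notation n := n'.+1.
Variable mon : 'X_{1..n}.
Hypothesis hmon0 : mon ord0 = 0%N.

Definition gen (cs : 'I_n -> K) (a : K) : endo K n :=
  [tuple (cs i *: ('X_i : {mpoly K[n]}) + (if i == ord0 then a *: 'X_[mon] else 0)) | i < n].

Definition mm (cs : 'I_n -> K) : K := \prod_(i < n) cs i ^+ mon i.

Lemma tnth_gen cs a i : tnth (gen cs a) i =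
  cs i *: ('X_i : {mpoly K[n]}) + (if i == ord0 then a *: 'X_[mon] else 0).
Proof. by rewrite tnth_mktuple. Qed.

Lemma comp_gen_X cs a i : comp_mpoly (gen cs a) ('X_i) = tnth (gen cs a) i.
Proof. by rewrite comp_mpolyXU -tnth_nth. Qed.

Lemma comp_gen_mon cs a : comp_mpoly (gen cs a) 'X_[mon] = mm cs *: 'X_[mon].
Proof.
rewrite comp_mpolyX mpolyXE_id /mm -scaler_prod; apply: eq_bigr => i _.
rewrite tnth_gen; case: eqP => [->|_]; first by rewrite hmon0 !expr0 scale1r.
by rewrite addr0 exprZn.
Qed.

Lemma comp_gen cs a ds b :
  endo_comp (gen cs a) (gen ds b) =
  gen (fun i => cs i * ds i) (ds ord0 * a + b * mm cs).
Proof.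
apply: eq_from_tnth => i; rewrite /endo_comp tnth_mktuple !tnth_gen.
rewrite comp_mpolyD comp_mpolyZ comp_gen_X tnth_gen.
case: eqP => [->|_]; last by rewrite !addr0 comp_mpoly0 addr0 scalerA mulrC.
rewrite comp_mpolyZ comp_gen_mon scalerDr !scalerA -addrA; congr (_ + _).
  by rewrite mulrC.
by rewrite scalerDl mulrC.
Qed.

Hypothesis hmon2 : (2 <= mdeg mon)%N.

Lemma U_neq_mon i : (U_(i) == mon)%MM = false.
Proof. by apply/negbTE/eqP => h; move: hmon2; rewrite -h mdeg1. Qed.

Lemma mon_neq0 : (0%MM == mon) = false.
Proof. by apply/negbTE/eqP => h; move: hmon2; rewrite -h mdeg0. Qed.

Lemma U_neq0 (i : 'I_n) : (U_(i) == 0)%MM = false.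
Proof. by apply/negbTE/eqP => h; have := mdeg1 i; rewrite h mdeg0. Qed.

Lemma gen_coef cs a i m : (tnth (gen cs a) i)@_m =
  cs i * (U_(i) == m)%:R + (if i == ord0 then a * (mon == m)%:R else 0).
Proof.
rewrite tnth_gen mcoeffD mcoeffZ mcoeffX; congr (_ + _).
by case: eqP => _; rewrite ?mcoeff0 // mcoeffZ mcoeffX.
Qed.

Lemma true_R : (true%:R : K) = 1. Proof. by []. Qed.
Lemma false_R : (false%:R : K) = 0. Proof. by []. Qed.

Lemma gen_inj cs a ds b : gen cs a = gen ds b -> (forall i, cs i = ds i) /\ a = b.
Proof.
move=> h; split.
  move=> i; have := gen_coef cs a i U_(i); rewrite h gen_coef eqxx.
  have e : (mon == U_(i)) = false by rewrite eq_sym U_neq_mon.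
  rewrite e true_R false_R.
  by rewrite !mulr1 !mulr0 !if_same !addr0.
have := gen_coef cs a ord0 mon; rewrite h gen_coef !eqxx.
have e : (U_(ord0) == mon) = false by rewrite U_neq_mon.
rewrite e ?true_R ?false_R.
by rewrite !mulr1 !mulr0 !add0r.
Qed.

Lemma gen_ext cs a ds b : (forall i, cs i = ds i) -> a = b -> gen cs a = gen ds b.
Proof. by move=> h ->; apply: eq_from_tnth => i; rewrite !tnth_gen h. Qed.

Lemma gen_id : gen (fun _ => 1) 0 = endo_id K n.
Proof.
apply: eq_from_tnth => i; rewrite tnth_gen /endo_id tnth_mktuple scale1r scale0r.
by rewrite if_same addr0.
Qed.

Lemma gen_torus lam : gen lam 0 = torus_elt lam.
Proof.
apply: eq_from_tnth => i; rewrite tnth_gen /torus_elt tnth_mktuple scale0r.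
by rewrite if_same addr0.
Qed.

Lemma gen_elem c : gen (fun _ => 1) c = elem_aut c mon.
Proof.
apply: eq_from_tnth => i; rewrite tnth_gen /elem_aut tnth_mktuple scale1r.
have -> : (i == ord0) = (val i == 0%N) by [].
by case: ifP; rewrite ?addr0.
Qed.

Lemma mm1 : mm (fun _ => 1) = 1.
Proof. by rewrite /mm big1 // => i _; rewrite expr1n. Qed.

Lemma gen_aut0 cs a : (forall i, cs i != 0) -> is_aut0 (gen cs a).
Proof.
move=> hcs; split; last first.
  by move=> i; rewrite gen_coef U_neq0 (eq_sym mon) mon_neq0 !mulr0 if_same addr0.
have hmm : mm cs != 0 by rewrite /mm prodf_seq_neq0; apply/allP => i _; rewrite expf_neq0.
exists (gen (fun i => (cs i)^-1) (- (cs ord0)^-1 * a / mm cs)); split.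
  rewrite comp_gen -gen_id; apply: gen_ext => [i|]; first by rewrite divff.
  by rewrite divfK // mulNr subrr.
rewrite comp_gen -gen_id; apply: gen_ext => [i|]; first by rewrite mulVf.
have -> : mm (fun i => (cs i)^-1) = (mm cs)^-1.
  by rewrite /mm -prodfV; apply: eq_bigr => i _; rewrite exprVn.
by field; rewrite hmm hcs.
Qed.


Lemma comp_torus_X lam m :
  comp_mpoly (gen lam 0) 'X_[m] = (\prod_(i < n) lam i ^+ m i) *: 'X_[m].
Proof.
rewrite comp_mpolyX [in RHS]mpolyXE_id -scaler_prod; apply: eq_bigr => i _.
by rewrite tnth_gen scale0r if_same addr0 exprZn.
Qed.

Lemma comp_torus_coef lam q m :
  (comp_mpoly (gen lam 0) q)@_m = q@_m * \prod_(i < n) lam i ^+ m i.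
Proof.
rewrite comp_mpolyEX raddf_sum /=.
under eq_bigr => m' _ do rewrite comp_torus_X scalerA mcoeffZ mcoeffX.
case: (boolP (m \in msupp q)) => hm.
  rewrite (bigD1_seq m) ?msupp_uniq //= eqxx true_R mulr1 [X in _ + X]big1 ?addr0 //.
  by move=> m' /negbTE ->; rewrite mulr0.
rewrite big1_seq; last first.
  move=> m' /andP[_ hm']; have -> : (m' == m) = false.
    by apply/negbTE; apply: contraNneq hm => <-.
  by rewrite mulr0.
by move: hm; rewrite -mcoeff_eq0 => /eqP ->; rewrite mul0r.
Qed.

Lemma comp_by_torus (g : endo K n) lam i :
  tnth (endo_comp g (gen lam 0)) i = lam i *: tnth g i.
Proof.
by rewrite tnth_mktuple tnth_gen scale0r if_same addr0 comp_mpolyZ comp_mpolyXU -tnth_nth.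
Qed.

Hypothesis two_neq0 : (2%:R : K) != 0.

Lemma sep_exp (e e' : nat) : e <> e' -> exists2 t : K, t != 0 & t ^+ e != t ^+ e'.
Proof.
wlog lt : e e' / (e < e')%N.
  move=> W ne; case: (ltngtP e e') => h; first exact: W.
    by have [t t0 ht] := W e' e h (nesym ne); exists t; rewrite // eq_sym.
  by [].
move=> _; set d := (e' - e)%N.
have hd : (0 < d)%N by rewrite subn_gt0.
have : size ('X^d + 1 : {poly K}) != 1%N.
  by rewrite size_addl ?size_polyXn ?size_poly1 //; rewrite -(prednK hd).
move/closed_rootP => [t]; rewrite /root !hornerE => /eqP htd.
have ht0 : t != 0.
  apply/negP => /eqP t0; move: htd; rewrite t0 expr0n -(prednK hd) /= add0r.
  by move/eqP; rewrite oner_eq0.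
exists t => //; rewrite -(subnK (ltnW lt)) -/d exprD.
apply/negP => /eqP h.
have : t ^+ d = 1.
  by apply: (mulIf (expf_neq0 e ht0)); rewrite mul1r.
have -> : t ^+ d = -1 by apply/eqP; rewrite -addr_eq0 htd.
move=> /eqP; rewrite -subr_eq0 -opprD oppr_eq0 => h2.
by move: two_neq0; rewrite mulr2n (eqP h2) eqxx.
Qed.

Definition hl (j : 'I_n) (t : K) : 'I_n -> K :=
  fun l => if l == ord0 then t ^+ mon j else if l == j then t else 1.

Lemma hl_prod j t (m : 'X_{1..n}) : j != ord0 ->
  \prod_(l < n) hl j t l ^+ m l = t ^+ (m ord0 * mon j + m j).
Proof.
move=> hj; rewrite (bigD1 ord0) // (bigD1 j) //= big1; last first.
  move=> l /andP[hl0 hlj]; rewrite /hl (negbTE hl0) (negbTE hlj) expr1n //.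
by rewrite /hl eqxx (negbTE hj) eqxx mulr1 -exprM exprD mulnC.
Qed.

Lemma hl_U j t i : j != ord0 -> hl j t i = t ^+ (U_(i) ord0 * mon j + U_(i) j).
Proof.
move=> hj; rewrite /hl !mnm1E; case: (eqVneq i ord0) => [->|hi].
  by rewrite mul1n eq_sym (negbTE hj) addn0.
by case: (i == j); rewrite /= ?expr1 ?expr0.
Qed.

Lemma hl_mm j t : j != ord0 -> mm (hl j t) = hl j t ord0.
Proof. by move=> hj; rewrite /mm hl_prod // hmon0 mul0n add0n /hl eqxx. Qed.

Lemma hl_nz j t : t != 0 -> forall l, hl j t l != 0.
Proof.
move=> ht l; rewrite /hl; case: ifP => _; first by rewrite expf_neq0.
by case: ifP => _; rewrite ?oner_eq0.
Qed.

Lemma comb0 (m : 'X_{1..n}) :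
  (forall j, j != ord0 -> m ord0 * mon j + m j = U_(@ord0 n') ord0 * mon j + U_(@ord0 n') j)%N ->
  m = U_(@ord0 n') \/ m = mon.
Proof.
move=> h.
have h' : forall j, j != ord0 -> (m ord0 * mon j + m j = mon j)%N.
  by move=> j hj; rewrite h // !mnm1E eqxx mul1n (neqF hj) addn0.
case: (ltngtP (m ord0) 1) => hm0.
- right; apply/mnmP => j; case: (eqVneq j ord0) => [->|hj].
    by rewrite hmon0; move: hm0; rewrite ltnS leqn0 => /eqP.
  by have := h' j hj; move: hm0; rewrite ltnS leqn0 => /eqP ->; rewrite mul0n add0n.
- exfalso; suff: mon = 0%MM by move=> e; move: hmon2; rewrite e mdeg0.
  apply/mnmP => j; rewrite mnm0E; case: (eqVneq j ord0) => [->|hj]; first exact: hmon0.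
  have := h' j hj; nia.
- left; apply/mnmP => j; rewrite mnm1E; case: (eqVneq j ord0) => [->|hj].
    by rewrite hm0.
  have := h' j hj; rewrite hm0 mul1n /=; lia.
Qed.

Lemma combi (i : 'I_n) (m : 'X_{1..n}) : i != ord0 ->
  (forall j, j != ord0 -> m ord0 * mon j + m j = U_(i) ord0 * mon j + U_(i) j)%N ->
  m = U_(i).
Proof.
move=> hi h.
have h' : forall j, j != ord0 -> (m ord0 * mon j + m j = (i == j))%N.
  by move=> j hj; rewrite h // !mnm1E (negbTE hi) mul0n.
case: (posnP (m ord0)) => hm0.
  apply/mnmP => j; rewrite mnm1E; case: (eqVneq j ord0) => [->|hj].
    by rewrite hm0 (negbTE hi).
  by have := h' j hj; rewrite hm0 mul0n add0n.
exfalso; suff: (mdeg mon <= 1)%N by move: hmon2; case: (mdeg mon) => [|[|]].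
rewrite -(mdeg1 i) !mdegE; apply: leq_sum => j _; rewrite mnm1E.
case: (eqVneq j ord0) => [->|hj]; first by rewrite hmon0.
have := h' j hj; case: (i == j) => /=; nia.
Qed.

Variable Phi : endo K n -> endo K n.
Hypothesis hPhi : is_group_aut_Aut0 Phi.
Hypothesis htorus : forall lam : 'I_n -> K, (forall i, lam i != 0) ->
              Phi (torus_elt lam) = torus_elt lam.

Lemma Phi_comp f g : is_aut0 f -> is_aut0 g -> Phi (endo_comp f g) = endo_comp (Phi f) (Phi g).
Proof. by case: hPhi => _ h _ _; apply: h. Qed.

Lemma Phi_torus lam : (forall i, lam i != 0) -> Phi (gen lam 0) = gen lam 0.
Proof. by move=> h; rewrite gen_torus htorus. Qed.

Definition one : 'I_n -> K := fun _ => 1.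
Lemma one_nz i : one i != 0. Proof. exact: oner_neq0. Qed.

Definition psi g := Phi (gen one g).

Lemma commH g lam : (forall i, lam i != 0) -> lam ord0 = mm lam ->
  endo_comp (gen lam 0) (psi g) = endo_comp (psi g) (gen lam 0).
Proof.
move=> hl hm.
have e : endo_comp (gen lam 0) (gen one g) = endo_comp (gen one g) (gen lam 0).
  rewrite !comp_gen; apply: gen_ext => [i|]; first by rewrite /one mulr1 mul1r.
  by rewrite /one mulr0 add0r mul0r addr0 hm mulrC.
have a1 := gen_aut0 0 hl; have a2 := gen_aut0 g one_nz.
rewrite /psi -{1}(Phi_torus hl) -(Phi_comp a1 a2) e (Phi_comp a2 a1).
by rewrite Phi_torus.
Qed.

Lemma coefH g lam i m : (forall i, lam i != 0) -> lam ord0 = mm lam ->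
  (tnth (psi g) i)@_m * \prod_(l < n) lam l ^+ m l = lam i * (tnth (psi g) i)@_m.
Proof.
move=> hl hm; have := congr1 (fun e => (tnth e i)@_m) (commH g hl hm).
by rewrite /= comp_by_torus mcoeffZ tnth_mktuple comp_torus_coef.
Qed.

Lemma exps g i m : (tnth (psi g) i)@_m != 0 -> forall j, j != ord0 ->
  (m ord0 * mon j + m j = U_(i) ord0 * mon j + U_(i) j)%N.
Proof.
move=> nz j hj; apply/eqP/negPn/negP => /eqP ne.
have [t t0 ht] := sep_exp ne.
have := coefH g i m (@hl_nz j t t0) (esym (@hl_mm j t hj)).
rewrite hl_prod // hl_U // mulrC => /(mulIf nz) e.
by move: ht; rewrite e eqxx.
Qed.

Lemma psi_gen g : psi g =
  gen (fun i => (tnth (psi g) i)@_U_(i)) ((tnth (psi g) ord0)@_mon).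
Proof.
apply: eq_from_tnth => i; apply/mpolyP => m; rewrite gen_coef.
case: (eqVneq m U_(i)) => [->|hmU].
  have e : (mon == U_(i)) = false by rewrite eq_sym U_neq_mon.
  by rewrite e true_R false_R mulr1 mulr0 if_same addr0.
rewrite false_R mulr0 add0r.
case: (eqVneq i ord0) => [hi|hi].
  case: (eqVneq m mon) => [->|hm]; first by rewrite ?hi ?eqxx ?true_R mulr1.
  rewrite false_R mulr0.
  apply/eqP/negPn/negP => nz; have := exps nz; rewrite hi => /comb0.
  by case=> e; [move: hmU; rewrite e hi eqxx | move: hm; rewrite e eqxx].
apply/eqP/negPn/negP => nz.
by move: hmU; rewrite (combi hi (exps nz)) eqxx.
Qed.

Definition cs g i := (tnth (psi g) i)@_U_(i).
Definition aa g := (tnth (psi g) ord0)@_mon.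

Lemma mm_one : mm one = 1.
Proof. exact: mm1. Qed.

Lemma psi0 i : cs 0 i = 1.
Proof.
have := psi_gen 0; rewrite {1}/psi Phi_torus; last exact: one_nz.
by case/gen_inj => h _; rewrite /cs -h.
Qed.

Lemma psiD g h : psi (g + h) = endo_comp (psi g) (psi h).
Proof.
have e : gen one (g + h) = endo_comp (gen one g) (gen one h).
  rewrite comp_gen; apply: gen_ext => [i|]; first by rewrite /one mulr1.
  by rewrite mm_one /one mul1r mulr1.
by rewrite /psi e Phi_comp //; apply: gen_aut0; exact: one_nz.
Qed.

Lemma csD g h i : cs (g + h) i = cs g i * cs h i.
Proof.
move: (psiD g h) (psi_gen (g + h)) (psi_gen g) (psi_gen h); rewrite /cs.
move: (psi (g + h)) (psi g) (psi h) => P0 P1 P2 E H0 H1 H2.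
rewrite H1 H2 comp_gen in E; rewrite H0 in E.
by case/gen_inj: E => E _; rewrite E.
Qed.

Lemma csMn g k i : cs (g *+ k) i = cs g i ^+ k.
Proof.
elim: k => [|k IH]; first by rewrite mulr0n psi0 expr0.
by rewrite mulrS csD IH exprS.
Qed.

Variable p : nat.
Hypothesis hp : p \in [pchar K].

Lemma cs1 g i : cs g i = 1.
Proof.
have h : cs g i ^+ p = 1 by rewrite -csMn -mulr_natr (pcharf0 hp) mulr0 psi0.
have h2 := pFrobenius_autB_comm hp (commr1 (cs g i)).
rewrite !pFrobenius_autE h expr1n subrr in h2.
have := pcharf_prime hp => /prime_gt0 p0.
by apply/eqP; rewrite -subr_eq0; move: (expf_eq0 (cs g i - 1) p); rewrite h2 eqxx p0 /= => <-.
Qed.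

Lemma psi_elem g : psi g = gen one (aa g).
Proof. by rewrite {1}psi_gen; apply: gen_ext => // i; rewrite -/(cs g i) cs1. Qed.

Lemma aa_nz g : g != 0 -> aa g != 0.
Proof.
move=> hg; apply/negP => /eqP h.
have e : psi g = Phi (gen one 0) by rewrite psi_elem h Phi_torus //; exact: one_nz.
case: hPhi => _ _ hinj _.
have := hinj _ _ (gen_aut0 g one_nz) (gen_aut0 0 one_nz) e.
by case/gen_inj => _ /eqP; rewrite (negbTE hg).
Qed.

Lemma aa_scale b : b != 0 -> aa b = b * aa 1.
Proof.
move=> hb; pose lam : 'I_n -> K := fun l => if l == ord0 then b else 1.
have hl : forall l, lam l != 0 by move=> l; rewrite /lam; case: ifP => _ //; exact: oner_neq0.
have hm : mm lam = 1.
  rewrite /mm big1 // => l _; rewrite /lam; case: (eqVneq l ord0) => [->|_].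
    by rewrite hmon0 expr0.
  by rewrite expr1n.
have e : endo_comp (gen lam 0) (gen one b) = endo_comp (gen one 1) (gen lam 0).
  rewrite !comp_gen; apply: gen_ext => [i|]; first by rewrite /one mulr1 mul1r.
  by rewrite hm /one mulr0 add0r mul0r addr0 /lam eqxx !mulr1.
have a1 := gen_aut0 0 hl.
move: (congr1 Phi e); rewrite !Phi_comp // ?Phi_torus //; try exact: gen_aut0 one_nz.
rewrite -/(psi b) -/(psi 1) !psi_elem !comp_gen.
case/gen_inj => _; rewrite hm /one mulr0 add0r mul0r addr0 /lam eqxx !mulr1 => ->.
by rewrite mulrC.
Qed.

Lemma main_sec : exists2 a : K, a != 0 &
    forall beta : K, beta != 0 -> Phi (elem_aut beta mon) = elem_aut (a * beta) mon.
Proof.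
exists (aa 1); first exact/aa_nz/oner_neq0.
move=> b hb; rewrite -!gen_elem -/one -/(psi b) psi_elem aa_scale //.
by rewrite mulrC.
Qed.
End S.

Theorem mainTheorem3 (K : closedFieldType) (p : nat) (n : nat)
  (hp : p \in [pchar K]) (hp2 : p != 2%N) (hn : (4 <= n)%N)
  (Phi : endo K n -> endo K n) (hPhi : is_group_aut_Aut0 Phi)
  (htorus : forall lam : 'I_n -> K, (forall i, lam i != 0) ->
              Phi (torus_elt lam) = torus_elt lam)
  (mon : 'X_{1..n})
  (hmon1 : forall i : 'I_n, val i = 0%N -> mon i = 0%N)
  (hmon2 : (2 <= mdeg mon)%N) :
  exists2 a : K, a != 0 &
    forall beta : K, beta != 0 -> Phi (elem_aut beta mon) = elem_aut (a * beta) mon.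
Proof.
case: n hn Phi hPhi htorus mon hmon1 hmon2 => [//|n'] _ Phi hPhi htorus mon hmon1 hmon2.
have h0 : mon ord0 = 0%N by apply: hmon1.
have two : (2%:R : K) != 0.
  apply/negP => /eqP h2.
  have : (2%N \in [pchar K]) by rewrite inE /= h2 eqxx.
  rewrite (pcharf_eq hp) inE => /eqP e.
  by move: hp2; rewrite -e eqxx.
exact: (main_sec h0 hmon2 two hPhi htorus hp).
Qed.
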